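(* $H_N^{[\infty]}$ acts affinely on $S^{N-1,1}_{\mathbb R,*}$: the assignment $x_i\mapsto\sum_ju_{ij}\otimes x_j$ defines a $*$-morphism $C(S^{N-1,1}_{\mathbb R,*})\to C(H_N^{[\infty]})\otimes C(S^{N-1,1}_{\mathbb R,*})$.
   Context: $C(S^{N-1}_{\mathbb R,+})$ is the universal $C^*$-algebra generated by self-adjoint $x_1,\dots,x_N$ with $\sum x_i^2=1$; $S^{N-1,1}_{\mathbb R,*}$ is defined by $x_ix_jx_k=0$ for $i,j,k$ pairwise distinct and $x_ix_jx_k=x_kx_jx_i$ otherwise. $C(O_N^+)$ is the universal $C^*$-algebra generated by self-adjoint $u_{ij}$ with $u=(u_{ij})$ orthogonal; $C(H_N^{[\infty]})$ is its quotient by the relations $abc=0$ whenever $a,b,c$ are entries of $u$ with $a\ne c$ on the same row or the same column (i.e. $u_{ia}u_{jb}u_{ic}=0$ for $a\ne c$, $u_{ia}u_{jb}u_{ka}=0$ for $i\ne k$). *)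

(* Defs.v *)
From HB Require Import structures.
From mathcomp Require Import all_boot all_order all_algebra.
Set Implicit Arguments. Unset Strict Implicit. Unset Printing Implicit Defensive.
Import GRing.Theory.
Local Open Scope ring_scope.

(* An involution on a ring making it a *-ring, together with the
   C*-type property  a^* a = 0 -> a = 0  (valid in every C*-algebra). *)
Definition star_ring (T : nzRingType) (star : T -> T) : Prop :=
  [/\ involutive star,
      forall a b, star (a + b) = star a + star b,
      forall a b, star (a * b) = star b * star a,
      star 1 = 1
    & forall a, star a * a = 0 -> a = 0].

Definition half_lib_sphere_rel (T : nzRingType) (star : T -> T) (N : nat)
    (x : 'I_N -> T) : Prop :=
  [/\ forall i, star (x i) = x i,
      \sum_(i < N) x i * x i = 1,
      forall i j k : 'I_N, i != j -> j != k -> i != k ->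
        x i * x j * x k = 0
    & forall i j k : 'I_N, ~~ [&& i != j, j != k & i != k] ->
        x i * x j * x k = x k * x j * x i].

(* Defining relations of C(H_N^{[infty]}): self-adjoint entries, u orthogonal
   (u u^t = u^t u = 1), and abc = 0 for a, c distinct entries on the same
   row or the same column. *)
Definition Hinf_rel (T : nzRingType) (star : T -> T) (N : nat)
    (u : 'I_N -> 'I_N -> T) : Prop :=
  [/\ forall i j, star (u i j) = u i j,
      forall i j : 'I_N, \sum_(k < N) u i k * u j k = (i == j)%:R,
      forall i j : 'I_N, \sum_(k < N) u k i * u k j = (i == j)%:R,
      forall i j k a b c : 'I_N, i = k -> a != c ->
        u i a * u j b * u k c = 0
    & forall i j k a b c : 'I_N, a = c -> i != k ->
        u i a * u j b * u k c = 0].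

(* Main.v *)
Require Import Defs.
From HB Require Import structures.
From mathcomp Require Import all_boot all_order all_algebra.
Import GRing.Theory.
Local Open Scope ring_scope.

Theorem proposition5p2 (T : nzRingType) (star : T -> T) (N : nat)
    (u : 'I_N -> 'I_N -> T) (x : 'I_N -> T) :
  star_ring star ->
  Hinf_rel star u ->
  half_lib_sphere_rel star x ->
  (forall i j k, u i j * x k = x k * u i j) ->
  half_lib_sphere_rel star (fun i => \sum_(j < N) u i j * x j).
Proof.
move=> [sK sD sM s1 sC] [usa urow ucol h4 h5] [xsa xsum x3 x4] hc.
set X := fun i => _.
have s0 : star 0 = 0.
  by apply: (@addrI _ (star 0)); rewrite -sD !addr0.
have sSum : forall (F : 'I_N -> T), star (\sum_(j < N) F j) = \sum_(j < N) star (F j).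
  by move=> F; apply: (big_morph star sD s0).
have hrow : forall i a b, a != b -> u i a * u i b = 0.
  move=> i a b nab; apply: sC.
  rewrite sM !usa -!mulrA (mulrA (u i a)) h4 //.
  by rewrite mulr0.
have hcol : forall a i j, i != j -> u i a * u j a = 0.
  move=> a i j nij; apply: sC.
  rewrite sM !usa -!mulrA (mulrA (u i a)) h5 //.
  by rewrite mulr0.
have st1 : forall i a k c, u i a * u k c = u i a * u k c * (u i a * u i a).
  move=> i a k c; have e1 : (1:T) = \sum_(e < N) u i e * u i e by rewrite urow eqxx.
  rewrite -[LHS]mulr1 {1}e1 mulr_sumr (bigD1 a) //=.
  rewrite big1 ?addr0 // => e ne.
  by rewrite mulrA h4 // ?mul0r // eq_sym.
have st2 : forall i a k c, u k c * u i a = u i a * u i a * (u k c * u i a).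
  move=> i a k c; have e1 : (1:T) = \sum_(l < N) u l a * u l a by rewrite ucol eqxx.
  rewrite -[LHS]mul1r {1}e1 mulr_suml (bigD1 i) //=.
  rewrite big1 ?addr0 // => l nl.
  rewrite mulrA -(mulrA (u l a) (u l a) (u k c)) -mulrA h5 //.
  by rewrite mulr0.
have hP : forall i a k c, GRing.comm (u k c) (u i a * u i a).
  move=> i a k c; rewrite /GRing.comm.
  transitivity (u i a * u i a * u k c * u i a * u i a).
    by rewrite mulrA (st2 i a k c) !mulrA.
  symmetry; by rewrite -[LHS](mulrA (u i a)) (st1 i a k c) !mulrA.
have hxu : forall c i a, GRing.comm (x c) (u i a) by move=> c i a; rewrite /GRing.comm hc.
have hux : forall c i a, GRing.comm (u i a) (x c) by move=> c i a; rewrite /GRing.comm hc.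
have E2 : forall i j, X i * X j = \sum_(a < N) \sum_(b < N) u i a * u j b * (x a * x b).
  move=> i j; rewrite /X big_distrl /=; apply: eq_bigr => a _.
  rewrite big_distrr /=; apply: eq_bigr => b _.
  rewrite -!mulrA; congr (_ * _); by rewrite !mulrA hc.
have E3 : forall i j k, X i * X j * X k =
    \sum_(a < N) \sum_(b < N) \sum_(c < N) u i a * u j b * u k c * (x a * x b * x c).
  move=> i j k; rewrite E2 big_distrl /=; apply: eq_bigr => a _.
  rewrite big_distrl /=; apply: eq_bigr => b _.
  rewrite /X big_distrr /=; apply: eq_bigr => c _.
  have cc : GRing.comm (x a * x b) (u k c).
    by apply: commr_sym; apply: commrM; apply: commr_sym.
  rewrite -!mulrA; congr (_ * _); congr (_ * _).
  by rewrite !mulrA cc !mulrA.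
have Sq : forall i, X i * X i = \sum_(a < N) u i a * u i a * (x a * x a).
  move=> i; rewrite E2; apply: eq_bigr => a _.
  rewrite (bigD1 a) //= big1 ?addr0 // => b nb.
  by rewrite hrow ?mul0r // eq_sym.
have Qc : forall i k, GRing.comm (X k) (X i * X i).
  move=> i k; apply: commr_sym; rewrite /X; apply: commr_sum => c _.
  apply: commr_sym; rewrite Sq; apply: commr_sum => a _.
  have cl : forall p q r : T, GRing.comm p r -> GRing.comm q r -> GRing.comm (p * q) r.
    by move=> p q r h1 h2; apply: commr_sym; apply: commrM; apply: commr_sym.
  apply: commrM; apply: cl.
  - exact: hP.
  - by apply: commrM; apply: hxu.
  - by apply: commrM; apply: hux.
  - rewrite /GRing.comm mulrA -x4 //.
    by rewrite eqxx.
split.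
- move=> i; rewrite /X sSum; apply: eq_bigr => j _.
  by rewrite sM usa xsa hc.
- rewrite (eq_bigr (fun i => \sum_(a < N) \sum_(b < N) u i a * u i b * (x a * x b))); last by move=> i _; rewrite E2.
  rewrite exchange_big /= -xsum; apply: eq_bigr => a _.
  rewrite exchange_big /=.
  rewrite (bigD1 a) //=.
  have -> : \sum_(b < N | b != a) \sum_(i < N) u i a * u i b * (x a * x b) = 0.
    apply: big1 => b nb; rewrite -big_distrl /= ucol.
    by rewrite eq_sym (negbTE nb) mul0r.
  by rewrite addr0 -big_distrl /= ucol eqxx mul1r.
- move=> i j k nij njk nik; rewrite E3.
  apply: big1 => a _; apply: big1 => b _; apply: big1 => c _.
  have [eab|nab] := eqVneq a b.
    by rewrite eab hcol // !mul0r.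
  have [ebc|nbc] := eqVneq b c.
    by rewrite ebc -(mulrA (u i a)) hcol // mulr0 !mul0r.
  have [eac|nac] := eqVneq a c.
    by rewrite h5 // mul0r.
  by rewrite x3 // mulr0.
- move=> i j k H.
  have [eij|nij] := eqVneq i j.
    by rewrite -eij -(mulrA (X k)) Qc.
  have [ejk|njk] := eqVneq j k.
    by rewrite -ejk -mulrA Qc.
  have [eik|nik] := eqVneq i k.
    by rewrite eik.
  by rewrite nij njk nik in H.
Qed.
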